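(* Let $r \ge 2$, $t \ge 2$ and $k \ge 1$ be integers, and let $G$ be a graph on $n$ vertices with $n > (r-1)(t-1)k$. Set $x = \lceil n/(r-1) \rceil$ and suppose $$\delta(G) \ge n - x + \left\lfloor \frac{x}{k+1} \right\rfloor$$ (equivalently, $\delta(G) \ge n - \lceil \frac{k}{k+1} x\rceil$). Suppose the edges of $G$ are coloured red and blue so that there is no blue path on $t$ vertices, and let $R$ be the spanning subgraph of $G$ formed by the red edges. Then the independence number of $R$ satisfies $\alpha(R) \le x-1$; that is, every set of $x$ vertices of $G$ contains two vertices joined by a red edge.
   Context: $\delta(G)$ is the minimum degree of $G$; $\alpha(R)$ is the maximum size of a set of pairwise non-adjacent vertices in $R$. A blue path on $t$ vertices means a path with $t$ vertices all of whose edges are blue edges of $G$. *)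

(* Defs.v *)
From mathcomp Require Import all_boot.
Set Implicit Arguments. Unset Strict Implicit. Unset Printing Implicit Defensive.

Definition simple_graph (T : finType) (G : rel T) : Prop :=
  symmetric G /\ irreflexive G.

Definition degree (T : finType) (G : rel T) (v : T) : nat := #|[set w | G v w]|.

(* minimum degree delta(G) (equals #|T| = 0 for the empty graph) *)
Definition min_degree (T : finType) (G : rel T) : nat :=
  \big[minn/#|T|]_(v : T) degree G v.

(* A red/blue colouring of the edges of G is given by the set of blue edges:
   a symmetric subrelation of G; the red edges are the remaining edges. *)
Definition blue_colouring (T : finType) (G blue : rel T) : Prop :=
  symmetric blue /\ subrel blue G.

Definition red_graph (T : finType) (G blue : rel T) : rel T :=
  fun u v => G u v && ~~ blue u v.

Definition has_path_on (T : finType) (E : rel T) (t : nat) : Prop :=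
  exists (v : T) (p : seq T), [/\ size p = t.-1, uniq (v :: p) & path E v p].

Definition independent (T : finType) (E : rel T) (S : {set T}) : bool :=
  [forall u in S, forall v in S, ~~ E u v].

Definition alpha (T : finType) (E : rel T) : nat :=
  \max_(S : {set T} | independent E S) #|S|.

(* Main.v *)
Require Import Defs.
From mathcomp Require Import all_boot zify.
Set Implicit Arguments. Unset Strict Implicit. Unset Printing Implicit Defensive.
Lemma cyc_lem (T : eqType) (E : rel T) (x y : T) (l1 r1 : seq T) :
  symmetric E -> sorted E (x :: l1 ++ y :: r1) -> E x y -> E (last y r1) (last x l1) ->
  cycle E ((y :: r1) ++ rev (x :: l1)).
Proof.
move=> Es Hs Exy Evu; move: Hs; rewrite /= cat_path /= => /andP[pl /andP[Ely pr]].
rewrite rcons_path cat_path pr /= last_cat rev_cons last_rcons Exy andbT.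
rewrite -rev_cons (lastI x l1) rev_rcons /= Evu /= rev_path.
by rewrite (@eq_path _ _ E) // => a b; rewrite Es.
Qed.

Lemma key (T : finType) (E : rel T) (U : {set T}) d t :
  symmetric E -> irreflexive E -> 0 < d -> t <= d.*2.+1 ->
  (forall s : seq T, uniq s -> sorted E s -> size s < t) ->
  (forall u, u \in U -> d <= #|[set w in U | E u w]|) ->
  U != set0 ->
  exists C : {set T}, [/\ C \subset U, #|C| < t, d < #|C| &
      forall y w, y \in C -> w \in U -> E y w -> w \in C].
Proof.
move=> Es Ei d0 tle np deg /set0Pn[v vU].
pose valid (s : seq T) := [&& uniq s, sorted E s & all (mem U) s].
pose P n := [exists s : n.-tuple T, valid s].
have P1 : P 1 by apply/existsP; exists [tuple v]; rewrite /valid /= vU.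
have Pb : forall n, P n -> n <= #|T|.
  move=> n /existsP[s /and3P[us _ _]].
  by rewrite -(size_tuple s) -(card_uniqP us); apply: max_card.
have Px : exists n, P n by exists 1.
case: (ex_maxnP Px Pb) => p /existsP[st vst] pmax.
have maxs : forall s', valid s' -> size s' <= p.
  by move=> s' vs'; apply: pmax; apply/existsP; exists (in_tuple s').
have p1 : 1 <= p by apply: pmax.
have sz := size_tuple st.
move: vst sz; move: (tval st) => s vs sz.
case: s vs sz => [|a q] vs sz; first by rewrite -sz in p1.
move: vs => /and3P[us ss als].
set b := last a q.
have sU : forall w, w \in a :: q -> w \in U by move=> w; move/allP: als => h /h.
have endA : forall w, w \in U -> E a w -> w \in a :: q.
  move=> w wU Eaw; apply/negPn/negP => wn.
  suff /maxs: valid (w :: a :: q) by rewrite /= -sz ltnn.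
  apply/and3P; split; first by rewrite cons_uniq wn.
    by rewrite /= Es Eaw.
  by rewrite /= wU.
have endB : forall w, w \in U -> E b w -> w \in a :: q.
  move=> w wU Ebw; apply/negPn/negP => wn.
  suff /maxs: valid (rcons (a :: q) w) by rewrite size_rcons -sz ltnn.
  apply/and3P; split; first by rewrite rcons_uniq wn.
    by rewrite /= rcons_path Ebw andbT.
  by rewrite all_rcons als andbT.
have pt : p < t by rewrite -sz; apply: np.
set m := size q.
pose IA := [set i : 'I_m.+1 | E a (nth a (a :: q) i.+1)].
pose IB := [set i : 'I_m.+1 | E b (nth a (a :: q) i)].
have hA : d <= #|IA|.
  apply: leq_trans (deg a (sU a (mem_head _ _))) _.
  apply: leq_trans (leq_imset_card (fun i : 'I_m.+1 => nth a (a::q) i.+1) IA).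
  apply/subset_leq_card/subsetP => w; rewrite inE => /andP[wU Eaw].
  have : w \in a :: q := endA w wU Eaw.
  rewrite in_cons => /orP[/eqP wa|wq]; first by rewrite wa Ei in Eaw.
  have im : index w q < m.+1 by rewrite ltnS ltnW // index_mem.
  apply/imsetP; exists (Ordinal im); last by rewrite /= nth_index.
  by rewrite inE /= nth_index.
have hB : d <= #|IB|.
  apply: leq_trans (deg b (sU b (mem_last _ _))) _.
  apply: leq_trans (leq_imset_card (fun i : 'I_m.+1 => nth a (a::q) i) IB).
  apply/subset_leq_card/subsetP => w; rewrite inE => /andP[wU Ebw].
  have wq : w \in a :: q := endB w wU Ebw.
  have im : index w (a :: q) < m.+1 by rewrite index_mem.
  apply/imsetP; exists (Ordinal im); last by rewrite /= nth_index.
  by rewrite inE /= nth_index.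
have hl : nth a (a :: q) m = b by rewrite -[m]/((size (a::q)).-1) nth_last.
have sub : IA :|: IB \subset [set~ ord_max].
  apply/subsetP => i; rewrite !inE => /orP[]; apply: contraL => /eqP -> /=.
    by rewrite nth_default ?Ei.
  by rewrite hl Ei.
have : 0 < #|IA :&: IB|.
  have := cardsUI IA IB; have := subset_leq_card sub.
  have pm : m.+1 = p := sz.
  rewrite cardsC1 card_ord /= -addnn in tle *.
  move: (#|IA :|: IB|) (#|IA :&: IB|) (#|IA|) (#|IB|) hA hB pt tle pm => x1 x2 x3 x4 h3 h4 h5 h6 h7 h1 h2.
  move: x1 x2 x3 x4 h1 h2 h3 h4 h5 h6 h7 d0. clear; clearbody m; lia.
rewrite card_gt0 => /set0Pn[i]; rewrite !inE => /andP[EA EB].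
have im : i < m.
  rewrite ltnNge; apply/negP => hm; move: EA; rewrite nth_default ?Ei //= ; lia.
have iq : i < size q := im.
have eq1 : drop i q = nth a q i :: drop i.+1 q := drop_nth a iq.
have hs : sorted E (a :: take i q ++ nth a q i :: drop i.+1 q).
  by rewrite -eq1 cat_take_drop.
have hlb : last (nth a q i) (drop i.+1 q) = b.
  by rewrite /b -[in RHS](cat_take_drop i q) eq1 last_cat.
have hla : last a (take i q) = nth a (a :: q) i.
  rewrite -[last a _](nth_last a (a :: take i q)) /= size_take iq.
  change (a :: take i q) with (take i.+1 (a :: q)).
  by rewrite nth_take.
have cyc : cycle E ((nth a q i :: drop i.+1 q) ++ rev (a :: take i q)).
  by apply: cyc_lem => //; rewrite hlb hla.
set c := (nth a q i :: drop i.+1 q) ++ rev (a :: take i q).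
have pc : perm_eq (a :: q) c.
  rewrite /c -{1}(cat_take_drop i q) eq1 -cat_cons perm_catC.
  by rewrite perm_cat2l perm_sym perm_rev.
have clos : forall y w, y \in a :: q -> w \in U -> E y w -> w \in a :: q.
  move=> y w yq wU Eyw; apply/negPn/negP => wn.
  have yc : y \in c by rewrite -(perm_mem pc).
  case: (rot_to yc) => j s' hrot.
  have cy : cycle E (y :: s') by rewrite -hrot rot_cycle.
  have py : path E y s' by move: cy; rewrite /= rcons_path => /andP[].
  have pe : perm_eq (a :: q) (y :: s').
    by apply: perm_trans pc _; rewrite -hrot perm_sym perm_rot perm_refl.
  suff /maxs: valid (w :: y :: s').
    by rewrite /= -sz (perm_size pe) /= ltnn.
  apply/and3P; split.
  - by rewrite cons_uniq -(perm_mem pe) wn -(perm_uniq pe).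
  - by rewrite /= Es Eyw.
  - apply/andP; split; [exact: wU | idtac]. by have := als; rewrite (perm_all _ pe).
exists [set w in a :: q]; split.
- by apply/subsetP => w; rewrite inE => /sU.
- by rewrite cardsE (card_uniqP us) sz.
- apply: leq_ltn_trans (deg a (sU a (mem_head _ _))) _.
  rewrite [X in _ < X](cardsD1 a) inE mem_head add1n ltnS.
  apply/subset_leq_card/subsetP => w; rewrite !inE => /andP[wU Eaw].
  have := endA w wU Eaw; rewrite in_cons => ->; rewrite andbT; apply/negP => /eqP wa; by rewrite wa Ei in Eaw.
- by move=> y w; rewrite !inE; apply: clos.
Qed.

Lemma decomp (T : finType) (E : rel T) d t :
  symmetric E -> irreflexive E -> 0 < d -> t <= d.*2.+1 ->
  (forall s : seq T, uniq s -> sorted E s -> size s < t) ->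
  forall U : {set T}, (forall u, u \in U -> d <= #|[set w in U | E u w]|) ->
  exists c, c * d.+1 <= #|U| <= c * t.-1.
Proof.
move=> Es Ei d0 tle np U.
move: {2}#|U| (leqnn #|U|) => n; elim: n U => [|n IH] U hU deg.
  by exists 0; rewrite !mul0n; lia.
case: (eqVneq U set0) => [->|Un0]; first by exists 0; rewrite cards0.
case: (key Es Ei d0 tle np deg Un0) => C [CU Ct Cd Ccl].
have cU' : #|U :\: C| = #|U| - #|C| := cardsDS CU.
have cCU : #|C| <= #|U| := subset_leq_card CU.
have deg' : forall u, u \in U :\: C -> d <= #|[set w in U :\: C | E u w]|.
  move=> u; rewrite inE => /andP[uC uU]; apply: leq_trans (deg u uU) _.
  apply/subset_leq_card/subsetP => w; rewrite !inE => /andP[wU Euw].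
  rewrite wU Euw !andbT; apply/negP => wC.
  by have := Ccl w u wC uU; rewrite Es Euw (negbTE uC) => /(_ isT).
case: (IH (U :\: C) _ deg') => [|c hc]; first by rewrite cU'; lia.
exists c.+1; rewrite !mulSn; lia.
Qed.

Lemma bigmin_le (I : finType) (F : I -> nat) (x0 : nat) (i : I) :
  \big[minn/x0]_(j : I) F j <= F i.
Proof.
have : i \in index_enum I by rewrite mem_index_enum.
elim: (index_enum I) => [//|j r IH]; rewrite big_cons in_cons.
case/orP => [/eqP<-|/IH h]; first exact: geq_minl.
exact: leq_trans (geq_minr _ _) h.
Qed.

Lemma nopath_seq (T : finType) (E : rel T) t : 1 <= t ->
  ~ has_path_on E t -> forall s : seq T, uniq s -> sorted E s -> size s < t.
Proof.
move=> t1 np [//|v s1] us ss; rewrite ltnNge; apply/negP => hs; apply: np.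
case: t t1 hs => [//|t'] _ hs.
exists v, (take t' s1); split.
- by rewrite size_takel.
- by rewrite -/(take t'.+1 (v :: s1)) take_uniq.
- by move: ss; rewrite /= -{1}(cat_take_drop t' s1) cat_path => /andP[].
Qed.

Theorem mainTheorem3 (r t k : nat) (T : finType) (G blue : rel T) :
  2 <= r -> 2 <= t -> 1 <= k ->
  simple_graph G ->
  (r - 1) * (t - 1) * k < #|T| ->
  let n := #|T| in
  let x := (n + r - 2) %/ (r - 1) in
  n - x + x %/ k.+1 <= min_degree G ->
  blue_colouring G blue ->
  ~ has_path_on blue t ->
  alpha (red_graph G blue) <= x - 1.
Proof.
move=> hr ht hk [Gs Gi] hn n x hdeg [bs bsub] nop.
have np := nopath_seq (ltnW ht) nop.
have bi : irreflexive blue by move=> u; apply/negP => /bsub; rewrite Gi.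
have nE : n = #|T| := erefl.
have xE : x = (n + r - 2) %/ (r - 1) := erefl.
clearbody x n.
have hx1 : n <= x * (r - 1).
  have r1 : 0 < r - 1 by rewrite subn_gt0.
  have := divn_eq (n + r - 2) (r - 1); have := ltn_pmod (n + r - 2) r1.
  rewrite -xE; lia.
have hx2 : (t - 1) * k < x.
  rewrite -nE in hn; nia.
set d := x %/ k.+1.
have hd1 : x < d.+1 * k.+1.
  have := divn_eq x k.+1; have := ltn_pmod x (ltn0Sn k); rewrite -/d; nia.
have d0 : 0 < d by nia.
have td : t <= d.*2.+1 by rewrite -addnn; nia.
apply/bigmax_leqP => S indS.
have ind : forall u w, u \in S -> w \in S -> G u w -> blue u w.
  move=> u w uS wS Guw; move/forall_inP: indS => /(_ u uS) /forall_inP /(_ w wS).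
  by rewrite /red_graph Guw /= negbK.
rewrite leqNgt; apply/negP => hS.
have hm : x <= #|S| by lia.
have dE : x %/ k.+1 = d by [].
rewrite dE in hdeg; clearbody d.
have degS : forall u, u \in S -> #|S| - x + d <= #|[set w in S | blue u w]|.
  move=> u uS.
  have h1 : min_degree G <= degree G u := bigmin_le _ _ _.
  have h2 : degree G u <= #|[set w in S | blue u w]| + #|~: S|.
    apply: (@leq_trans #|[set w in S | blue u w] :|: ~: S|).
      apply/subset_leq_card/subsetP => w; rewrite !inE => Guw.
      by case wS: (w \in S) => /=; [rewrite ind | ].
    by rewrite -cardsUI leq_addr.
  have h3 : #|~: S| = #|T| - #|S| by rewrite (cardsCs (~: S)) setCK.
  have m_le : #|S| <= #|T| := max_card _.
  lia.
have dpos : 0 < #|S| - x + d by lia.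
have tle : t <= (#|S| - x + d).*2.+1 by rewrite -addnn in td *; lia.
case: (decomp bs bi dpos tle np degS) => c /andP[h1 h2].
rewrite -subn1 in h2.
case: (leqP c k) => hc.
  have := leq_mul hc (leqnn (t - 1)); rewrite [k * _]mulnC.
  move: h2 hx2 hm; move: (c * (t - 1)) ((t - 1) * k) #|S|; clear; lia.
have := leq_mul hc (leqnn (#|S| - x + d).+1).
have : k.+1 * (#|S| - x + d).+1 = k.+1 * (#|S| - x) + d.+1 * k.+1.
  by rewrite -addnS mulnDr; congr (_ + _); rewrite mulnC.
move: h1 hd1 hm; move: (c * (#|S| - x + d).+1) (k.+1 * (#|S| - x + d).+1)
  (d.+1 * k.+1) #|S| => a1 a2 a3 m h1 hd1 hm -> h.
have : #|S| - x <= k.+1 * (#|S| - x) by apply: leq_pmull.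
move: h h1 hd1 hm; clear; lia.
Qed.
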